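(* Let $X_0, X_1, \dots$ be positive, independent, identically distributed random variables with $E X_i = \mu_X > 0$, and let $L_1, L_2, \dots$ be positive, independent, identically distributed random variables with $E L_i = \mu_L < \infty$. Let $l_0 > 0$ be a constant. Consider the following stochastic ''ant on a rubber rope'' process. Initially the rope has length $R_0 = l_0$ and the ant is at the left endpoint, at position $p_0 = 0$. For each second $i = 1, 2, \dots$: first the ant moves forward along the rope by $X_{i-1}$ units, reaching position $p_{i-1} + X_{i-1}$; if $p_{i-1} + X_{i-1} \geq R_{i-1}$, the ant has reached the right endpoint of the rope at second $i$. Otherwise, at the end of second $i$ the rope stretches uniformly and instantly by $L_i$ units to length $R_i = R_{i-1} + L_i$, and the ant (carried along by the uniform stretching) is at position $p_i = (p_{i-1} + X_{i-1}) \cdot \frac{R_i}{R_{i-1}}$. Then, almost surely, the ant reaches the right endpoint of the rope at some finite second.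
   Context: Uniform stretching of the rope means that every point of the rope is scaled by the same factor, so the ratio of the ant's position to the rope's length is unchanged by a stretch. *)

(* Defs.v *)
From HB Require Import structures.
From mathcomp Require Import all_boot all_order all_algebra.
From mathcomp Require Import all_classical all_reals all_analysis.
Set Implicit Arguments. Unset Strict Implicit. Unset Printing Implicit Defensive.
Import Order.TTheory GRing.Theory Num.Theory.
Local Open Scope classical_set_scope.
Local Open Scope ring_scope.

Definition mutually_independent d (T : measurableType d) (R : realType)
  (P : probability T R) (X : nat -> T -> R) : Prop :=
  forall (J : seq nat) (B : nat -> set R), uniq J ->
    (forall i, i \in J -> measurable (B i)) ->
    P (\bigcap_(i in [set` J]) (X i @^-1` B i)) =
    (\prod_(i <- J) P (X i @^-1` B i))%E.

Definition identically_distributed d (T : measurableType d) (R : realType)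
  (P : probability T R) (X : nat -> T -> R) : Prop :=
  forall n (B : set R), measurable B -> P (X n @^-1` B) = P (X 0%N @^-1` B).

(* Deterministic ant-on-a-rubber-rope dynamics.
   x n = X_n (step of the ant during second n+1),
   l n = L_{n+1} (stretch at the end of second n+1).
   rope l0 l n = R_n,  pos l0 x l n = p_n. *)
Fixpoint rope (R : realType) (l0 : R) (l : nat -> R) (n : nat) : R :=
  match n with
  | 0%N => l0
  | n'.+1 => rope l0 l n' + l n'
  end.

Fixpoint pos (R : realType) (l0 : R) (x l : nat -> R) (n : nat) : R :=
  match n with
  | 0%N => 0
  | n'.+1 => (pos l0 x l n' + x n') * (rope l0 l n'.+1 / rope l0 l n')
  end.

(* The ant reaches the right endpoint at second n+1 iff p_n + X_n >= R_n;
   it reaches the endpoint at some finite second iff such an n exists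
   (the first such n is the actual reaching time; before it, the process
   follows exactly the recursion above). *)
Definition reaches_end (R : realType) (l0 : R) (x l : nat -> R) : Prop :=
  exists n : nat, rope l0 l n <= pos l0 x l n + x n.

(* Main.v *)
Require Import Defs.
From HB Require Import structures.
From mathcomp Require Import all_boot all_order all_algebra.
From mathcomp Require Import all_classical all_reals all_analysis.
From mathcomp Require Import ring lra measurable_realfun.
Import Order.TTheory GRing.Theory Num.Theory.
Local Open Scope classical_set_scope.
Local Open Scope ring_scope.
Lemma rope_gt0 {R : realType} {l0 : R} {l : nat -> R} :
  0 < l0 -> (forall n, 0 < l n) -> forall n, 0 < rope l0 l n.
Proof.
move=> l00 lp; elim=> [//|n IH] /=; exact: addr_gt0.
Qed.

Lemma pos_eq {R : realType} (l0 : R) (x l : nat -> R) :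
  0 < l0 -> (forall n, 0 < l n) -> forall n,
  pos l0 x l n = rope l0 l n * \sum_(k < n) x k / rope l0 l k.
Proof.
move=> l00 lp; elim=> [|n IH]; first by rewrite big_ord0 mulr0.
have rn := rope_gt0 l00 lp n.
rewrite big_ord_recr /= IH.
rewrite -/(rope l0 l n.+1).
field; exact: lt0r_neq0.
Qed.

Lemma not_reach_bound {R : realType} (l0 : R) (x l : nat -> R) :
  0 < l0 -> (forall n, 0 < l n) -> ~ reaches_end l0 x l ->
  forall n, \sum_(k < n) x k / rope l0 l k < 1.
Proof.
move=> l00 lp nr [|n]; first by rewrite big_ord0.
have rn := rope_gt0 l00 lp n.
have h : pos l0 x l n + x n < rope l0 l n.
  by rewrite ltNge; apply/negP => h; apply: nr; exists n.
rewrite big_ord_recr /=.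
rewrite pos_eq // in h.
rewrite -(ltr_pM2l rn) mulr1 mulrDr.
by rewrite [_ * (x n / _)]mulrC divfK ?lt0r_neq0.
Qed.

Lemma key_term {R : realType} (a b t c r xx : R) :
  0 < a -> 0 <= b <= 1 -> a * b <= xx -> 0 < r -> 0 <= t -> 0 <= c ->
  a * (2 * t * c * b - t ^+ 2 * r * c ^+ 2) <= xx / r.
Proof.
move=> a0 /andP[b0 b1] abx r0 t0 c0.
have h1 : 1 / r >= 2 * t * c - t ^+ 2 * r * c ^+ 2.
  rewrite ler_pdivlMr // -subr_ge0.
  have -> : 1 - (2 * t * c - t ^+ 2 * r * c ^+ 2) * r = (1 - t * r * c) ^+ 2 by ring.
  exact: sqr_ge0.
have h2 : b * (1 / r) >= 2 * t * c * b - t ^+ 2 * r * c ^+ 2.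
  have q0 : 0 <= t ^+ 2 * r * c ^+ 2.
    exact: mulr_ge0 (mulr_ge0 (sqr_ge0 t) (ltW r0)) (sqr_ge0 c).
  apply: (@le_trans _ _ (b * (2 * t * c - t ^+ 2 * r * c ^+ 2))).
    set q := t ^+ 2 * r * c ^+ 2 in q0 *.
    have : 0 <= (1 - b) * q by rewrite mulr_ge0 // subr_ge0.
    lra.
  exact: ler_wpM2l.
have h3 : a * b / r <= xx / r by rewrite ler_pM2r ?invr_gt0.
apply: le_trans h3.
have -> : a * b / r = a * (b * (1 / r)) by rewrite mul1r mulrA.
by apply: ler_wpM2l; first exact: ltW.
Qed.

Definition hc {R : realType} (k : nat) : R := (k.+1%:R)^-1.

Lemma hc_gt0 {R : realType} k : 0 < @hc R k.
Proof. by rewrite /hc invr_gt0 ltr0Sn. Qed.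

Lemma hc_le1 {R : realType} k : @hc R k <= 1.
Proof. by rewrite /hc invf_le1 ?ltr0Sn // ler1n. Qed.

Lemma det_bound {R : realType} (l0 a t : R) (x l b : nat -> R) (N : nat) :
  0 < l0 -> (forall n, 0 < l n) -> 0 < a -> 0 <= t ->
  (forall k, 0 <= b k <= 1) -> (forall k, a * b k <= x k) ->
  a * (2 * t * (\sum_(k < N) hc k * b k) - t ^+ 2 * (\sum_(k < N) hc k ^+ 2 * rope l0 l k))
  <= \sum_(k < N) x k / rope l0 l k.
Proof.
move=> l00 lp a0 t0 b01 abx.
have -> : a * (2 * t * (\sum_(k < N) hc k * b k) - t ^+ 2 * (\sum_(k < N) hc k ^+ 2 * rope l0 l k))
  = \sum_(k < N) a * (2 * t * hc k * b k - t ^+ 2 * rope l0 l k * hc k ^+ 2).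
  rewrite -mulr_sumr; congr (_ * _).
  rewrite sumrB !mulr_sumr; congr (_ - _); apply: eq_bigr => i _; ring.
apply: ler_sum => k _; apply: key_term => //.
- exact: rope_gt0.
- exact/ltW/hc_gt0.
Qed.

Lemma harmonic_unbounded {R : realType} (M : R) : exists N, M <= \sum_(k < N) @hc R k.
Proof.
apply/not_existsP => hn.
have := @dvg_harmonic R; apply.
apply: nondecreasing_is_cvgn.
  apply/nondecreasing_seqP => n; rewrite /series /= big_nat_recr //= lerDl.
  exact: harmonic_ge0.
exists M => _ [n _ <-]; rewrite /series /= big_mkord.
move/negP: (hn n); rewrite -ltNge => /ltW.
by under eq_bigr do rewrite /hc.
Qed.

Lemma markov_gen d (T : measurableType d) (R : realType) (P : probability T R)
  (f : T -> R) (A : set T) (c : R) :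
  measurable A -> measurable_fun setT f -> (forall w, 0 <= f w) -> 0 <= c ->
  (forall w, A w -> c <= f w) ->
  (c%:E * P A <= \int[P]_w (f w)%:E)%E.
Proof.
move=> mA mf f0 c0 cf.
have -> : (c%:E * P A = \int[P]_w (c * \1_A w)%:E)%E.
  under eq_integral do rewrite EFinM.
  rewrite ge0_integralZl_EFin //= ?integral_indic ?setIT //.
  apply/measurable_EFinP; exact: measurable_indic.
apply: (@ge0_le_integral _ _ _ P setT measurableT) => //.
- by move=> w _; rewrite lee_fin indicE; case: (w \in A); rewrite ?mulr1 ?mulr0.
- apply/measurable_EFinP; apply: measurable_funM => //; exact: measurable_indic.
- exact/measurable_EFinP.
- move=> w _; rewrite lee_fin indicE; case: (boolP (w \in A)) => wA.
    by rewrite mulr1; apply: cf; rewrite -inE.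
  by rewrite mulr0.
Qed.

Lemma int_indic_sum d (T : measurableType d) (R : realType) (P : probability T R)
  (I : Type) (s : seq I) (c : I -> R) (B : I -> set T) :
  (forall i, 0 <= c i) -> (forall i, measurable (B i)) ->
  (\int[P]_w (\sum_(i <- s) c i * \1_(B i) w)%:E =
   \sum_(i <- s) (c i)%:E * P (B i))%E.
Proof.
move=> c0 mB.
rewrite (eq_integral (fun w => \sum_(i <- s) (c i * \1_(B i) w)%:E)%E); last first.
  by move=> w _; rewrite sumEFin.
rewrite ge0_integral_sum //.
- apply: eq_bigr => i _.
  under eq_integral do rewrite EFinM.
  rewrite ge0_integralZl_EFin //= ?integral_indic ?setIT //. 
  apply/measurable_EFinP; exact: measurable_indic.
- move=> i; apply/measurable_EFinP; apply: measurable_funM.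
    exact: measurable_cst.
  exact: measurable_indic.
- by move=> i w _; rewrite lee_fin mulr_ge0 // indicE; case: (w \in B i).
Qed.

Lemma int_ident d (T : measurableType d) (R : realType) (P : probability T R)
  (Y : nat -> {RV P >-> R}) :
  (forall n w, 0 <= Y n w) -> identically_distributed P (fun n => Y n : T -> R) ->
  forall k, (\int[P]_w (Y k w)%:E = \int[P]_w (Y 0%N w)%:E)%E.
Proof.
move=> Y0 idY k.
have h j : (\int[P]_w (Y j w)%:E = \int[distribution P (Y j)]_y (`|y|)%:E)%E.
  rewrite ge0_integral_distribution //=.
  - by apply: eq_integral => w _; rewrite /= ger0_norm.
  - apply/measurable_EFinP; exact: normr_measurable.
rewrite !h; apply: eq_measure_integral => A mA _ /=.
by rewrite /distribution /pushforward /= idY.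
Qed.

Lemma mrope d (T : measurableType d) (R : realType) (P : probability T R)
  (L : nat -> {RV P >-> R}) (l0 : R) k :
  measurable_fun setT (fun w => rope l0 (fun n => L n w) k).
Proof.
elim: k => [|k IH] /=; first exact: measurable_cst.
apply: measurable_funD => //; exact: measurable_funPT.
Qed.

Lemma int_rope d (T : measurableType d) (R : realType) (P : probability T R)
  (L : nat -> {RV P >-> R}) (l0 mu : R) :
  0 < l0 -> (forall n w, 0 < L n w) -> identically_distributed P (fun n => L n : T -> R) ->
  (\int[P]_w (L 0%N w)%:E = mu%:E)%E ->
  forall k, (\int[P]_w (rope l0 (fun n => L n w) k)%:E = (l0 + k%:R * mu)%:E)%E.
Proof.
move=> l00 Lp idL hmu; elim=> [|k IH] /=.
  rewrite mul0r addr0 integral_cst //.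
  by rewrite -[in RHS](mule1 l0%:E); congr (_ * _)%E; exact: probability_setT.
under eq_integral do rewrite EFinD.
rewrite ge0_integralD //.
- rewrite IH int_ident //; last by move=> n w; exact/ltW.
  by rewrite hmu -EFinD mulrSr; congr (_%:E); ring.
- move=> w _; rewrite lee_fin; apply/ltW/rope_gt0 => // n; exact: Lp.
- apply/measurable_EFinP; exact: mrope.
- by move=> w _; rewrite lee_fin ltW.
- apply/measurable_EFinP; exact: measurable_funPT.
Qed.

Lemma int_V d (T : measurableType d) (R : realType) (P : probability T R)
  (L : nat -> {RV P >-> R}) (l0 mu : R) (N : nat) :
  0 < l0 -> 0 <= mu -> (forall n w, 0 < L n w) ->
  identically_distributed P (fun n => L n : T -> R) ->
  (\int[P]_w (L 0%N w)%:E = mu%:E)%E ->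
  (\int[P]_w (\sum_(k < N) hc k ^+ 2 * rope l0 (fun n => L n w) k)%:E
    <= ((l0 + mu) * \sum_(k < N) hc k)%:E)%E.
Proof.
move=> l00 mu0 Lp idL hmu.
rewrite (eq_integral (fun w => \sum_(k < N) (hc k ^+ 2 * rope l0 (fun n => L n w) k)%:E)%E); last first.
  by move=> w _; rewrite sumEFin.
rewrite ge0_integral_sum //; last 2 first.
- move=> k; apply/measurable_EFinP; apply: measurable_funM.
    exact: measurable_cst.
  exact: mrope.
- move=> k w _; rewrite lee_fin; apply: mulr_ge0; first exact: sqr_ge0.
  exact/ltW/(rope_gt0 l00 (fun n => Lp n w)).
rewrite (eq_bigr (fun k : 'I_N => (hc k ^+ 2 * (l0 + k%:R * mu))%:E)); last first.
  move=> k _; under eq_integral do rewrite EFinM.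
  rewrite ge0_integralZl_EFin ?sqr_ge0 //.
  - by rewrite (@int_rope _ _ _ P L l0 mu l00 Lp idL hmu) -EFinM.
  - move=> w _; rewrite lee_fin; exact/ltW/(rope_gt0 l00 (fun n => Lp n w)).
  - apply/measurable_EFinP; exact: mrope.
rewrite sumEFin lee_fin mulr_sumr; apply: ler_sum => k _.
have hk := hc_gt0 (R:=R) k.
have e : hc k * (k%:R + 1) = 1 :> R by rewrite /hc -natr1 mulVf // natr1.
have k0 : 0 <= k%:R :> R by [].
rewrite expr2 -mulrA mulrC; apply: ler_wpM2r; first exact: ltW.
have : (l0 + k%:R * mu) <= (l0 + mu) * (k%:R + 1) by nra.
move=> h; rewrite -(ler_pM2r (_ : 0 < k%:R + 1)); last by rewrite natr1.
have -> : hc k * (l0 + k%:R * mu) * (k%:R + 1) = l0 + k%:R * mu.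
  by rewrite mulrC mulrA [_ * hc k]mulrC e mul1r.
exact: h.
Qed.

Lemma int_U d (T : measurableType d) (R : realType) (P : probability T R)
  (B : nat -> set T) (q : R) (N : nat) :
  (forall k, measurable (B k)) -> (forall k, P (B k) = q%:E) ->
  (\int[P]_w (\sum_(k < N) hc k * \1_(B k) w)%:E = (q * \sum_(k < N) hc k)%:E)%E.
Proof.
move=> mB PB.
rewrite (@int_indic_sum _ _ _ P _ (index_enum 'I_N) (fun k : 'I_N => hc k) (fun k : 'I_N => B k)) //.
- under eq_bigr do rewrite PB -EFinM.
  by rewrite sumEFin mulr_sumr; congr (_%:E); apply: eq_bigr => i _; rewrite mulrC.
- move=> i; exact/ltW/hc_gt0.
Qed.

Lemma sum_pair {R : realType} (N : nat) (c : nat -> R) (q : R) :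
  \sum_(j < N) \sum_(k < N) c j * c k * (if j == k then q else q * q)
  = q * q * (\sum_(k < N) c k) ^+ 2 + (q - q * q) * \sum_(k < N) c k ^+ 2.
Proof.
have inner j : (j < N)%N -> \sum_(k < N) c j * c k * (if j == k then q else q * q)
   = c j * (q * q) * \sum_(k < N) c k + (q - q * q) * c j ^+ 2.
  move=> jN.
  rewrite (eq_bigr (fun k : 'I_N => c j * c k * (q * q) + (j == k)%:R * ((q - q * q) * c j ^+ 2))); last first.
    move=> k _; case: eqP => [->|_] /=; rewrite ?mulr1n ?mulr0n; ring.
  rewrite big_split /= mulr_sumr; congr (_ + _).
    by apply: eq_bigr => k _; ring.
  rewrite (bigD1 (Ordinal jN)) //= eqxx mul1r big1 ?addr0 // => k /negPf.
  by rewrite eq_sym => h; rewrite -val_eqE /= in h; rewrite h mul0r.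
rewrite (eq_bigr (fun j : 'I_N => c j * (q * q) * \sum_(k < N) c k + (q - q * q) * c j ^+ 2)); last first.
  by move=> j _; apply: inner.
rewrite big_split /= -mulr_suml -mulr_sumr; congr (_ + _).
by rewrite -mulr_suml expr2; ring.
Qed.

Lemma int_U2 d (T : measurableType d) (R : realType) (P : probability T R)
  (B : nat -> set T) (q : R) (N : nat) :
  (forall k, measurable (B k)) -> (forall k, P (B k) = q%:E) ->
  (forall j k, j != k -> P (B j `&` B k) = (q * q)%:E) ->
  (\int[P]_w ((\sum_(k < N) hc k * \1_(B k) w) ^+ 2)%:E =
   (q * q * (\sum_(k < N) hc k) ^+ 2 + (q - q * q) * \sum_(k < N) hc k ^+ 2)%:E)%E.
Proof.
move=> mB PB PBB.
rewrite (eq_integral (fun w => (\sum_(pr : 'I_N * 'I_N)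
   (hc pr.1 * hc pr.2) * \1_(B pr.1 `&` B pr.2) w)%:E)); last first.
  move=> w _; congr (_%:E).
  rewrite expr2 mulr_suml -(pair_bigA _ (fun j k : 'I_N => hc j * hc k * \1_(B j `&` B k) w)) /=.
  apply: eq_bigr => j _.
  rewrite mulr_sumr; apply: eq_bigr => k _.
  rewrite indicI /=; ring.
rewrite (@int_indic_sum _ _ _ P _ (index_enum _) (fun pr : 'I_N * 'I_N => hc pr.1 * hc pr.2)
   (fun pr : 'I_N * 'I_N => B pr.1 `&` B pr.2)); last 2 first.
- by move=> pr; rewrite mulr_ge0 // ltW // hc_gt0.
- move=> pr; exact: measurableI.
rewrite (eq_bigr (fun pr : 'I_N * 'I_N => (hc pr.1 * hc pr.2 *
   (if pr.1 == pr.2 then q else q * q))%:E)); last first.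
  move=> [j k] _ /=; case: eqP => [<-|jk].
    by rewrite setIid PB -EFinM.
  rewrite PBB -?EFinM //; apply/negP => /eqP h; apply: jk; exact: val_inj.
rewrite sumEFin -(pair_bigA _ (fun j k : 'I_N => hc j * hc k * (if j == k then q else q * q))) /=.
by rewrite sum_pair.
Qed.

Lemma div_bound {R : realType} (x : \bar R) (c z : R) :
  0 < c -> (0 <= x)%E -> (c%:E * x <= z%:E)%E -> (x <= (z / c)%:E)%E.
Proof.
move=> c0; case: x => [r| |] //= r0.
- by rewrite -EFinM !lee_fin ler_pdivlMr // mulrC.
- by rewrite gt0_muley ?lte_fin.
Qed.

Lemma int_cstP d (T : measurableType d) (R : realType) (P : probability T R) (r : R) :
  (\int[P]_w r%:E = r%:E)%E.
Proof.
rewrite integral_cst //; rewrite -[in RHS](mule1 r%:E); congr (_ * _)%E.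
exact: probability_setT.
Qed.

Lemma mU d (T : measurableType d) (R : realType) (B : nat -> set T) (N : nat) :
  (forall k, measurable (B k)) ->
  measurable_fun setT (fun w => \sum_(k < N) (hc k : R) * \1_(B k) w).
Proof.
move=> mB; apply: measurable_sum => k; apply: measurable_funM.
  exact: measurable_cst.
exact: measurable_indic.
Qed.

Lemma int_dev d (T : measurableType d) (R : realType) (P : probability T R)
  (B : nat -> set T) (q : R) (N : nat) :
  (forall k, measurable (B k)) -> (forall k, P (B k) = q%:E) ->
  (forall j k, j != k -> P (B j `&` B k) = (q * q)%:E) -> 0 <= q ->
  (\int[P]_w ((\sum_(k < N) hc k * \1_(B k) w - q * \sum_(k < N) hc k) ^+ 2)%:E =
   ((q - q * q) * \sum_(k < N) hc k ^+ 2)%:E)%E.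
Proof.
move=> mB PB PBB q0.
pose U := fun w => \sum_(k < N) (hc k : R) * (\1_(B k) w : R).
pose S := \sum_(k < N) (hc k : R).
pose Q := \sum_(k < N) (hc k : R) ^+ 2.
have S0 : 0 <= S by apply: sumr_ge0 => k _; exact/ltW/hc_gt0.
have m0 : 0 <= q * S by exact: mulr_ge0.
have U0 w : 0 <= U w.
  apply: sumr_ge0 => k _; apply: mulr_ge0; first exact/ltW/hc_gt0.
  by rewrite indicE; case: (w \in B k).
have mUf : measurable_fun setT U by exact: mU.
have e : (\int[P]_w (((U w - q * S) ^+ 2)%:E + ((2 * (q * S)) * U w)%:E) =
          \int[P]_w ((U w ^+ 2)%:E + ((q * S) ^+ 2)%:E))%E.
  by apply: eq_integral => w _; rewrite -!EFinD; congr (_%:E); ring.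
rewrite ge0_integralD // in e; last 4 first.
- by move=> w _; rewrite lee_fin sqr_ge0.
- apply/measurable_EFinP; apply: measurable_funX; apply: measurable_funB.
    exact: mUf.
  exact: measurable_cst.
- by move=> w _; rewrite lee_fin mulr_ge0 // mulr_ge0.
- apply/measurable_EFinP; apply: measurable_funM; [exact: measurable_cst|exact: mUf].
rewrite (@ge0_integralD _ _ _ P setT measurableT) in e; last 4 first.
- by move=> w _; rewrite lee_fin sqr_ge0.
- apply/measurable_EFinP; exact: measurable_funX mUf.
- by move=> w _; rewrite lee_fin sqr_ge0.
- exact: measurable_cst.
move: e.
under [X in (_ + X)%E = _ -> _]eq_integral do rewrite EFinM.
rewrite ge0_integralZl_EFin //; last 3 first.
- by move=> w _; rewrite lee_fin.
- exact/measurable_EFinP.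
- by rewrite mulr_ge0.
rewrite (@int_U _ _ _ P B q N mB PB) (@int_U2 _ _ _ P B q N mB PB PBB).
rewrite int_cstP.
case: (\int[P]_w ((U w - q * S) ^+ 2)%:E)%E => [r| |] //=; rewrite -?EFinM -?EFinD.
- case=> h; congr (_%:E).
  apply: (@addrI _ (2 * (q * S) * (q * S))); rewrite addrC.
  rewrite /S in h *; rewrite h; ring.
Qed.

Lemma small_bad d (T : measurableType d) (R : realType) (P : probability T R)
  (X L : nat -> {RV P >-> R}) (l0 a q mu : R) :
  (forall n w, 0 < X n w) -> (forall n w, 0 < L n w) -> 0 < l0 ->
  identically_distributed P (fun n => L n : T -> R) ->
  0 <= mu -> (\int[P]_w (L 0%N w)%:E = mu%:E)%E ->
  0 < a -> 0 < q ->
  (forall k, P (X k @^-1` `]a, +oo[) = q%:E) ->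
  (forall j k, j != k -> P (X j @^-1` `]a, +oo[ `&` X k @^-1` `]a, +oo[) = (q * q)%:E) ->
  forall eps, 0 < eps -> exists Bs, [/\ measurable Bs,
    [set w | ~ reaches_end l0 (fun n => X n w) (fun n => L n w)] `<=` Bs &
    (P Bs <= eps%:E)%E].
Proof.
move=> Xp Lp l00 Lid mu0 hmu a0 q0 PB PBB eps eps0.
pose B k := X k @^-1` `]a, +oo[.
have mB k : measurable (B k).
  by have := measurable_funPT (X k) measurableT _ (measurable_itv `]a, +oo[); rewrite setTI.
pose K := 2 * (l0 + mu) / eps.
have K0 : 0 < K by rewrite /K divr_gt0 // mulr_gt0 // ltr_wpDr.
pose M := 8 / (q * eps) + 4 * K / (a * q ^+ 2).
have M0 : 0 < M.
  rewrite /M; apply: addr_gt0; apply: divr_gt0.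
  - by [].
  - exact: mulr_gt0.
  - exact: mulr_gt0.
  - by apply: mulr_gt0 => //; exact: exprn_gt0.
have [N hN] := harmonic_unbounded M.
pose S := \sum_(k < N) (hc k : R).
have S0 : 0 < S by exact: lt_le_trans hN.
pose Uf := fun w => \sum_(k < N) (hc k : R) * (\1_(B k) w : R).
pose Vf := fun w => \sum_(k < N) (hc k : R) ^+ 2 * rope l0 (fun n => L n w) k.
have mUf : measurable_fun setT Uf by exact: mU.
have mVf : measurable_fun setT Vf.
  apply: measurable_sum => k; apply: measurable_funM; first exact: measurable_cst.
  exact: mrope.
pose B1 := Uf @^-1` `]-oo, q * S / 2[.
pose B2 := Vf @^-1` `]K * S, +oo[.
have mB1 : measurable B1.
  by have := mUf measurableT _ (measurable_itv `]-oo, q * S / 2[); rewrite setTI.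
have mB2 : measurable B2.
  by have := mVf measurableT _ (measurable_itv `]K * S, +oo[); rewrite setTI.
exists (B1 `|` B2); split.
- exact: measurableU.
- move=> w /= nr.
  rewrite /B1 /B2 /= !in_itv /= ?andbT.
  case: (ltP (Uf w) (q * S / 2)) => h1; [by left|right].
  rewrite ltNge; apply/negP => h2.
  have hs := @not_reach_bound R l0 (fun n => X n w) (fun n => L n w) l00 (fun n => Lp n w) nr N.
  pose t := q / (2 * K).
  have t0 : 0 <= t by rewrite /t ltW // divr_gt0 // mulr_gt0.
  have hd := @det_bound R l0 a t (fun n => X n w) (fun n => L n w)
     (fun k => \1_(B k) w) N l00 (fun n => Lp n w) a0 t0.
  have hb k : 0 <= (\1_(B k) w : R) <= 1.
    by rewrite indicE; case: (w \in B k); rewrite /= ?lexx ?ler01.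
  have hax k : a * \1_(B k) w <= X k w.
    rewrite indicE; case: (boolP (w \in B k)) => h.
      rewrite mulr1; move: h; rewrite inE /B /= in_itv /= andbT => h; exact: ltW.
    by rewrite mulr0; apply: ltW.
  have hd' : a * (2 * t * Uf w - t ^+ 2 * Vf w) <=
     \sum_(k < N) X k w / rope l0 (fun n => L n w) k := hd hb hax.
  have h3 : t * q * S - t ^+ 2 * K * S <= 2 * t * Uf w - t ^+ 2 * Vf w.
    have e1 := ler_wpM2l t0 h1.
    have e2 := ler_wpM2l (sqr_ge0 t) h2.
    have -> : t * q * S = 2 * (t * (q * S / 2)) by field.
    have -> : t ^+ 2 * K * S = t ^+ 2 * (K * S) by ring.
    have -> : 2 * t * Uf w = 2 * (t * Uf w) by ring.
    lra.
  have h4 : t * q * S - t ^+ 2 * K * S = q ^+ 2 * S / (4 * K).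
    rewrite /t; field; exact: lt0r_neq0.
  have h5 : 1 <= a * (q ^+ 2 * S / (4 * K)).
    have hM : 4 * K / (a * q ^+ 2) <= S.
      apply: le_trans hN; rewrite /M lerDr; apply: divr_ge0 => //.
      by apply: ltW; apply: mulr_gt0.
    have aq : 0 < a * q ^+ 2 by apply: mulr_gt0 => //; exact: exprn_gt0.
    rewrite ler_pdivrMr // in hM.
    have -> : a * (q ^+ 2 * S / (4 * K)) = (S * (a * q ^+ 2)) / (4 * K).
      by field; exact: lt0r_neq0.
    rewrite ler_pdivlMr ?mul1r //; exact: mulr_gt0.
  have h6 : a * (q ^+ 2 * S / (4 * K)) <= a * (2 * t * Uf w - t ^+ 2 * Vf w).
    by rewrite -h4; apply: ler_wpM2l => //; exact: ltW.
  have := le_lt_trans (le_trans h5 (le_trans h6 hd')) hs.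
  by rewrite ltxx.
- have PBn k : P (B k) = q%:E by exact: PB.
  have hQS : \sum_(k < N) (hc k : R) ^+ 2 <= S.
    apply: ler_sum => k _; rewrite expr2 ger_pMr ?hc_gt0 //; exact: hc_le1.
  have Q0 : 0 <= \sum_(k < N) (hc k : R) ^+ 2 by apply: sumr_ge0 => k _; exact: sqr_ge0.
  have P1 : (P B1 <= (eps / 2)%:E)%E.
    have c0 : 0 < (q * S / 2) ^+ 2 by apply: exprn_gt0; apply: divr_gt0 => //; exact: mulr_gt0.
    have hm := @markov_gen _ _ _ P (fun w => (Uf w - q * S) ^+ 2) B1 ((q * S / 2) ^+ 2) mB1.
    have mf : measurable_fun setT (fun w => (Uf w - q * S) ^+ 2).
      apply: measurable_funX; apply: measurable_funB; [exact: mUf|exact: measurable_cst].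
    have hcB : forall w, B1 w -> (q * S / 2) ^+ 2 <= (Uf w - q * S) ^+ 2.
      move=> w; rewrite /B1 /= in_itv /= => hw.
      have y0 : q * S / 2 <= q * S - Uf w.
        have -> : q * S - Uf w = q * S / 2 + (q * S / 2 - Uf w) by field.
        by rewrite lerDl subr_ge0 ltW.
      have z0 : 0 <= q * S / 2 by apply: divr_ge0 => //; apply: mulr_ge0; exact: ltW.
      have -> : (Uf w - q * S) ^+ 2 = (q * S - Uf w) ^+ 2 by ring.
      by rewrite ler_pXn2r // ?nnegrE //; exact: le_trans y0.
    have h := hm mf (fun w => sqr_ge0 _) (ltW c0) hcB.
    have h' : (((q * S / 2) ^+ 2)%:E * P B1 <=
        ((q - q * q) * \sum_(k < N) (hc k : R) ^+ 2)%:E)%E.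
      by rewrite -(@int_dev _ _ _ P B q N mB PBn PBB (ltW q0)); exact: h.
    apply: le_trans (div_bound _ _ _ c0 (measure_ge0 P B1) h') _.
    rewrite lee_fin ler_pdivrMr //.
    have hS : 8 / (q * eps) <= S.
      apply: le_trans hN; rewrite /M lerDl; apply: divr_ge0.
        by apply: mulr_ge0 => //; exact: ltW.
      by apply: ltW; apply: mulr_gt0 => //; exact: exprn_gt0.
    rewrite ler_pdivrMr ?mulr_gt0 // in hS.
    have e1 : (q - q * q) * \sum_(k < N) (hc k : R) ^+ 2 <= q * S.
      have : 0 <= q * q * \sum_(k < N) (hc k : R) ^+ 2 by rewrite mulr_ge0 // mulr_ge0 // ltW.
      have := ler_wpM2l (ltW q0) hQS.
      lra.
    apply: le_trans e1 _.
    have -> : eps / 2 * (q * S / 2) ^+ 2 = (q * S) * (S * (q * eps)) / 8 by field.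
    rewrite ler_pdivlMr //.
    apply: ler_wpM2l; [by apply: mulr_ge0; exact: ltW | exact: hS].
  have P2 : (P B2 <= (eps / 2)%:E)%E.
    have KS0 : 0 < K * S by exact: mulr_gt0.
    have V0 w : 0 <= Vf w.
      apply: sumr_ge0 => k _; apply: mulr_ge0; first exact: sqr_ge0.
      exact/ltW/(rope_gt0 l00 (fun n => Lp n w)).
    have hcB : forall w, B2 w -> K * S <= Vf w.
      by move=> w; rewrite /B2 /= in_itv /= andbT => /ltW.
    have h := @markov_gen _ _ _ P Vf B2 (K * S) mB2 mVf V0 (ltW KS0) hcB.
    have h' := le_trans h (@int_V _ _ _ P L l0 mu N l00 mu0 Lp Lid hmu).
    apply: le_trans (div_bound _ _ _ KS0 (measure_ge0 P B2) h') _.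
    rewrite lee_fin le_eqVlt; apply/orP; left; apply/eqP.
    rewrite -/S /K.
    have lm : l0 + mu != 0 by apply: lt0r_neq0; exact: ltr_wpDr.
    have e0 : eps != 0 by exact: lt0r_neq0.
    have s0 : S != 0 by exact: lt0r_neq0.
    by field; rewrite lm e0 s0.
  apply: le_trans (measureU2 _ mB1 mB2) _.
  by rewrite (splitr eps) EFinD; apply: leeD.
Qed.

Theorem theorem1 (d : measure_display) (T : measurableType d) (R : realType)
  (P : probability T R)
  (X : nat -> {RV P >-> R}) (L : nat -> {RV P >-> R}) (l0 : R) :
  (forall n w, 0 < X n w) ->
  mutually_independent P (fun n => X n : T -> R) ->
  identically_distributed P (fun n => X n : T -> R) ->
  (0 < 'E_P[X 0%N])%E ->
  (forall n w, 0 < L n w) ->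
  mutually_independent P (fun n => L n : T -> R) ->
  identically_distributed P (fun n => L n : T -> R) ->
  ('E_P[L 0%N] < +oo)%E ->
  0 < l0 ->
  {ae P, forall w, reaches_end l0 (fun n => X n w) (fun n => L n w)}.
Proof.
move=> Xp Xind Xid EX0 Lp Lind Lid EL l00.
have muE0 : (0 <= 'E_P[L 0%N])%E.
  by apply: expectation_ge0 => w; exact: ltW.
have muEf : ('E_P[L 0%N])%E \is a fin_num by rewrite ge0_fin_numE.
pose mu := fine ('E_P[L 0%N])%E.
have mu0 : 0 <= mu by rewrite /mu fine_ge0.
have hmu : (\int[P]_w (L 0%N w)%:E = mu%:E)%E by rewrite -expectation_def fineK.
pose F n := X 0%N @^-1` `](n.+1%:R)^-1, +oo[ : set T.
have mF n : measurable (F n).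
  by have := measurable_funPT (X 0%N) measurableT _ (measurable_itv `](n.+1%:R)^-1, +oo[); rewrite setTI.
have [n0 hn0] : exists n, (0 < P (F n))%E.
  case: (pselect (exists n, (0 < P (F n))%E)) => // hn; exfalso.
  have h0 n : P (F n) = 0%E.
    have := measure_ge0 P (F n); rewrite le_eqVlt => /orP [/eqP <- //| h].
    by exfalso; apply: hn; exists n.
  have cov : [set: T] `<=` \bigcup_n F n.
    move=> w _; exists (Num.bound (X 0%N w)^-1) => //=.
    rewrite /F /= in_itv /= andbT.
    have x0 := Xp 0%N w.
    have xi : 0 < (X 0%N w)^-1 by rewrite invr_gt0.
    have hb := archi_boundP (ltW xi).
    rewrite invf_plt ?posrE ?invr_gt0 ?ltr0Sn //.
    apply: lt_le_trans hb _; rewrite ler_nat; exact: leqnSn.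
  have := measure_sigma_subadditive P mF measurableT cov.
  rewrite eseries0 => [|i _ _]; last exact: h0.
  move=> h; suff : (1 <= 0 :> \bar R)%E by rewrite lee_fin ler10.
  apply: le_trans h; rewrite le_eqVlt; apply/orP; left; apply/eqP; apply: esym.
  exact: probability_setT.
pose a : R := (n0.+1%:R)^-1.
have a0 : 0 < a by rewrite /a invr_gt0 ltr0Sn.
pose q := fine (P (F n0)).
have Ffin : P (F n0) \is a fin_num by exact: fin_num_measure.
have PB k : P (X k @^-1` `]a, +oo[) = q%:E.
  by rewrite Xid // /q fineK.
have q0 : 0 < q by rewrite /q -lte_fin fineK.
have PBB j k : j != k ->
    P (X j @^-1` `]a, +oo[ `&` X k @^-1` `]a, +oo[) = (q * q)%:E.
  move=> jk.
  have hu : uniq [:: j; k] by rewrite /= inE jk.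
  have hm : forall i, i \in [:: j; k] -> measurable ([set` `]a, +oo[] : set R).
    by move=> *; exact: measurable_itv.
  have h := Xind [:: j; k] (fun _ : nat => [set` `]a, +oo[]) hu hm.
  rewrite !big_cons big_nil mule1 !PB -EFinM in h.
  rewrite -h; congr (P _); apply/seteqP; split => w /=.
  - move=> [hj hk] i; rewrite /= !inE => /orP [/eqP->|/eqP->] //.
  - by move=> hw; split; apply: hw; rewrite /= !inE eqxx ?orbT.
have em m : 0 < (m.+1%:R)^-1 :> R by rewrite invr_gt0 ltr0Sn.
have hsb m := @small_bad _ _ _ P X L l0 a q mu Xp Lp l00 Lid mu0 hmu a0 q0 PB PBB
   ((m.+1%:R)^-1) (em m).
have [Bs hBs] := choice hsb.
have mBs m : measurable (Bs m) by case: (hBs m).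
have mBig : measurable (\bigcap_m Bs m) by exact: bigcapT_measurable.
exists (\bigcap_m Bs m); split => //.
- have hle m : (P (\bigcap_m Bs m) <= ((m.+1%:R)^-1)%:E)%E.
    case: (hBs m) => _ _ hP; apply: le_trans hP.
    apply: le_measure; rewrite ?inE //.
    exact: bigcap_inf.
  have Bfin : P (\bigcap_m Bs m) \is a fin_num by exact: fin_num_measure.
  rewrite -(fineK Bfin); congr (_%:E).
  have r0 : 0 <= fine (P (\bigcap_m Bs m)) by rewrite fine_ge0.
  apply/eqP; rewrite eq_le r0 andbT leNgt; apply/negP => rp.
  pose r := fine (P (\bigcap_m Bs m)).
  have ri : 0 < r^-1 by rewrite invr_gt0.
  have hb := archi_boundP (ltW ri).
  have := hle (Num.bound r^-1).
  rewrite -(fineK Bfin) lee_fin -/r => h.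
  have : (Num.bound r^-1).+1%:R^-1 < r.
    rewrite invf_plt ?posrE ?ltr0Sn //.
    apply: lt_le_trans hb _; rewrite ler_nat; exact: leqnSn.
  by rewrite ltNge h.
- move=> w /= nr m _.
  by case: (hBs m) => _ hsub _; apply: hsub.
Qed.
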